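(* Let $N\ge 2$ be an integer, $h>0$, $\epsilon>0$ and $\Delta t>0$. Let $A$ be the $N\times N$ matrix discretizing the negative second derivative with homogeneous Neumann boundary conditions, i.e. for $V=(v_1,\dots,v_N)^T$, $$(AV)_i=\frac{2v_i-v_{i-1}-v_{i+1}}{h^2},\quad i=1,\dots,N,\qquad\text{with the convention } v_0=v_1,\ v_{N+1}=v_N .$$ Consider the sequence of vectors $U^k\in\mathbb{R}^N$ defined from $U^0$ by the linearized implicit Euler scheme (with zero boundary flux) $$U^{k+1}+\Delta t\, A U^{k+1}+\frac{\Delta t}{\epsilon^2}(U^k)^2U^{k+1}=U^k+\frac{\Delta t}{\epsilon^2}U^k,\qquad k\ge 0,$$ where $(U^k)^2U^{k+1}$ denotes the componentwise product $\big((u^k_i)^2u^{k+1}_i\big)_{i}$. If $\Delta t<\epsilon^2$ and $-1\le U^0\le 1$ componentwise, then $-1\le U^k\le 1$ componentwise for every $k\in\mathbb{N}$.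
   Context: This scheme is the time discretization of the semi-discrete (finite-difference in space) one-dimensional Allen–Cahn equation $u_t-u_{xx}+\frac{1}{\epsilon^2}u(u^2-1)=0$ on $]0,1[$ with Neumann boundary conditions $u_x(0,t)=\alpha(t)$, $u_x(1,t)=0$; the proposition concerns the case of zero control flux $\alpha=0$, in which the boundary source term of the scheme vanishes. Inequalities between vectors are understood componentwise. *)

(* Defs.v *)
From Stdlib Require Import Reals Lra Lia.
Open Scope R_scope.

(* Vectors of R^N are represented as functions nat -> R, meaningful on
   indices 1..N. *)

Definition ghost (N : nat) (v : nat -> R) (j : nat) : R :=
  if Nat.eqb j 0 then v 1%nat
  else if Nat.eqb j (S N) then v N
  else v j.

Definition neumannA (N : nat) (h : R) (v : nat -> R) (i : nat) : R :=
  (2 * ghost N v i - ghost N v (i - 1)%nat - ghost N v (i + 1)%nat) / (h ^ 2).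

Definition scheme_step (N : nat) (h eps dt : R) (uk uk1 : nat -> R) : Prop :=
  forall i : nat, (1 <= i <= N)%nat ->
    uk1 i + dt * neumannA N h uk1 i + dt / eps ^ 2 * (uk i ^ 2 * uk1 i)
    = uk i + dt / eps ^ 2 * uk i.

(* Main.v *)
Require Import Defs.
From Stdlib Require Import Reals Lra Lia Psatz FunctionalExtensionality.
Open Scope R_scope.

Fixpoint argmax (v : nat -> R) (n : nat) : nat :=
  match n with
  | O => 1%nat
  | S p => let m := argmax v p in
           if Rle_dec (v (S p)) (v m) then m else S p
  end.

Lemma argmax_spec v n :
  (1 <= argmax v n <= Nat.max n 1)%nat /\
  forall i, (1 <= i <= n)%nat -> v i <= v (argmax v n).
Proof.
  induction n as [|p [H1 H2]]; simpl.
  - split; [lia|]. intros; lia.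
  - destruct (Rle_dec (v (S p)) (v (argmax v p))) as [Hle|Hnle].
    + split; [lia|]. intros i Hi.
      destruct (Nat.eq_dec i (S p)); [subst; auto|]. apply H2; lia.
    + split; [lia|]. intros i Hi.
      destruct (Nat.eq_dec i (S p)); [subst; lra|].
      specialize (H2 i ltac:(lia)). lra.
Qed.

Lemma ghost_in N v j : (1 <= N)%nat -> (j <= S N)%nat ->
  exists i, (1 <= i <= N)%nat /\ ghost N v j = v i.
Proof.
  intros HN Hj. unfold ghost.
  destruct (Nat.eqb_spec j 0). { exists 1%nat; split; [lia|reflexivity]. }
  destruct (Nat.eqb_spec j (S N)). { exists N; split; [lia|reflexivity]. }
  exists j; split; [lia|reflexivity].
Qed.

Lemma A_nonneg N h v m : (1 <= N)%nat -> 0 < h -> (1 <= m <= N)%nat ->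
  (forall i, (1 <= i <= N)%nat -> v i <= v m) -> 0 <= neumannA N h v m.
Proof.
  intros HN Hh Hm Hmax. unfold neumannA.
  assert (Hg : ghost N v m = v m).
  { unfold ghost. destruct (Nat.eqb_spec m 0); [lia|].
    destruct (Nat.eqb_spec m (S N)); [lia|]. reflexivity. }
  destruct (ghost_in N v (m-1) HN ltac:(lia)) as [i1 [Hi1 E1]].
  destruct (ghost_in N v (m+1) HN ltac:(lia)) as [i2 [Hi2 E2]].
  rewrite Hg, E1, E2. apply Rmult_le_pos.
  - pose proof (Hmax i1 Hi1). pose proof (Hmax i2 Hi2). lra.
  - left. apply Rinv_0_lt_compat. nra.
Qed.

Lemma A_neg N h v : neumannA N h (fun i => - v i) = fun i => - neumannA N h v i.
Proof.
  apply functional_extensionality_dep. intro i. unfold neumannA, ghost.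
  destruct (Nat.eqb i 0), (Nat.eqb (i-1) 0), (Nat.eqb (i+1) 0),
    (Nat.eqb i (S N)), (Nat.eqb (i-1) (S N)), (Nat.eqb (i+1) (S N));
  unfold Rdiv; ring.
Qed.

Theorem mainTheorem1 (N : nat) (h eps dt : R) (U : nat -> nat -> R) :
  (2 <= N)%nat -> 0 < h -> 0 < eps -> 0 < dt ->
  (forall k : nat, scheme_step N h eps dt (U k) (U (S k))) ->
  dt < eps ^ 2 ->
  (forall i : nat, (1 <= i <= N)%nat -> -1 <= U 0%nat i <= 1) ->
  forall k i : nat, (1 <= i <= N)%nat -> -1 <= U k i <= 1.
Proof.
  intros HN Hh He Hdt Hstep Hlt H0 k.
  assert (Hd0 : 0 < dt / eps ^ 2) by (apply Rdiv_lt_0_compat; nra).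
  assert (Hd1 : dt / eps ^ 2 < 1).
  { apply (Rmult_lt_reg_r (eps^2)); [nra|]. field_simplify; lra. }
  set (d := dt / eps ^ 2) in *.
  induction k as [|k IH]; [exact H0|].
  pose proof (Hstep k) as Hs. unfold scheme_step in Hs. fold d in Hs.
  intros i0 Hi0; split.
  - set (w := fun i => - U (S k) i).
    destruct (argmax_spec w N) as [Hm Hmax].
    set (m := argmax w N) in *.
    assert (Hm' : (1 <= m <= N)%nat) by lia.
    pose proof (A_nonneg N h w m ltac:(lia) Hh Hm' Hmax) as HA.
    unfold w in HA. rewrite A_neg in HA.
    specialize (Hs m Hm'). specialize (IH m Hm').
    set (a := U k m) in *. set (u := U (S k) m) in *.
    assert (Hu : -1 <= u).
    { destruct (Rle_dec (-1) u); auto.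
      assert (dt * neumannA N h (U (Datatypes.S k)) m <= 0) by nra.
      assert (u * (1 + d * a ^ 2) >= a * (1 + d)) by nra.
      assert (0 <= (d*a+1)*(a+1)) by (apply Rmult_le_pos; nra).
      assert (0 < 1 + d*a^2) by nra.
      assert ((u+1)*(1+d*a^2) < 0) by (apply Rmult_neg_pos; lra).
      exfalso. nra. }
    specialize (Hmax i0 Hi0). unfold w in Hmax. fold u in Hmax. lra.
  - destruct (argmax_spec (U (S k)) N) as [Hm Hmax].
    set (m := argmax (U (S k)) N) in *.
    assert (Hm' : (1 <= m <= N)%nat) by lia.
    pose proof (A_nonneg N h (U (S k)) m ltac:(lia) Hh Hm' Hmax) as HA.
    specialize (Hs m Hm'). specialize (IH m Hm').
    set (a := U k m) in *. set (u := U (S k) m) in *.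
    assert (Hu : u <= 1).
    { destruct (Rle_dec u 1); auto.
      assert (dt * neumannA N h (U (Datatypes.S k)) m >= 0) by nra.
      assert (u * (1 + d * a ^ 2) <= a * (1 + d)) by nra.
      assert (0 <= (1-d*a)*(1-a)) by (apply Rmult_le_pos; nra).
      assert (0 < 1 + d*a^2) by nra.
      assert (0 < (u-1)*(1+d*a^2)) by (apply Rmult_lt_0_compat; lra).
      exfalso. nra. }
    specialize (Hmax i0 Hi0). fold u in Hmax. lra.
Qed.
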